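(* Let $k,\ell>0$, $\pi_1\in\mathcal{T}_k$, $\pi_2\in\mathcal{T}_\ell$, let $t=\operatorname{slmax}(\pi_2)$, let $a_1,\dots,a_t$ be the values of the left-to-right maxima of $\mathcal{S}(\pi_2)$ in order, and let $1\le i\le t$. Let $$\pi=C_2(\pi_1,\pi_2,i)=\pi_1^{+(0,k,a_i)}\cdot(k+\ell+1)\cdot\pi_2^{+(k-1,a_i+1,k)}.$$ Then $\pi\in\mathcal{T}_{k+\ell+1}$, and $\operatorname{slmax}(\pi)=\operatorname{slmax}(\pi_1)+\operatorname{slmax}(\pi_2)-i+1$.
   Context: For a finite sequence $A$ of distinct integers, the stack-sorting operator $\mathcal{S}$ is defined by $\mathcal{S}(\epsilon)=\epsilon$ for the empty sequence and, if $A$ is non-empty with largest element $m$, writing $A=A_L\cdot(m)\cdot A_R$ (concatenation), $\mathcal{S}(A)=\mathcal{S}(A_L)\cdot\mathcal{S}(A_R)\cdot(m)$. For $n\ge1$, $\mathcal{T}_n$ is the set of permutations $\sigma\in\mathfrak{S}_n$ (viewed as sequences) with $\mathcal{S}(\mathcal{S}(\sigma))$ equal to the identity. For a sequence $\tau$ of integers and $k_1<k_2$, $\tau^{+(k_1,m,k_2)}$ is obtained by adding $k_1$ to each element strictly smaller than $m$ and $k_2$ to every other element. For a permutation $\sigma$, $\operatorname{slmax}(\sigma)$ is the number of left-to-right maxima of $\mathcal{S}(\sigma)$ (indices $i$ such that $\mathcal{S}(\sigma)(i)>\mathcal{S}(\sigma)(j)$ for all $j<i$). *)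

(* Defs.v *)
From mathcomp Require Import all_boot.
Set Implicit Arguments. Unset Strict Implicit. Unset Printing Implicit Defensive.

(* Sequences of distinct integers are represented as seq nat (all values
   occurring in the statement are positive). *)

(* Stack-sorting operator S, by recursion with fuel = size of the input.
   For a non-empty A with maximum m, A = A_L ++ [m] ++ A_R where
   A_L = take (index m A) A and A_R = drop (index m A).+1 A. *)
Fixpoint ssort_fuel (fuel : nat) (A : seq nat) : seq nat :=
  match fuel with
  | 0 => [::]
  | f.+1 =>
    match A with
    | [::] => [::]
    | _ :: _ =>
      let m := \max_(x <- A) x in
      let j := index m A in
      ssort_fuel f (take j A) ++ ssort_fuel f (drop j.+1 A) ++ [:: m]
    end
  end.

Definition stack_sort (A : seq nat) : seq nat := ssort_fuel (size A) A.

Definition is_perm (n : nat) (s : seq nat) : bool := perm_eq s (iota 1 n).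

Definition inT (n : nat) (s : seq nat) : bool :=
  is_perm n s && (stack_sort (stack_sort s) == iota 1 n).

Definition shift (k1 m k2 : nat) (tau : seq nat) : seq nat :=
  [seq (if x < m then x + k1 else x + k2) | x <- tau].

Definition lrmax_vals (s : seq nat) : seq nat :=
  [seq nth 0 s i | i <- iota 0 (size s)
     & all (fun j => nth 0 s j < nth 0 s i) (iota 0 i)].

Definition slmax (s : seq nat) : nat := size (lrmax_vals (stack_sort s)).

(* C_2(pi1, pi2, i), with a_i the i-th (1-based) left-to-right maximum
   value of S(pi2) *)
Definition C2 (k l : nat) (pi1 pi2 : seq nat) (i : nat) : seq nat :=
  let a := nth 0 (lrmax_vals (stack_sort pi2)) i.-1 in
  shift 0 k a pi1 ++ [:: k + l + 1] ++ shift (k - 1) (a + 1) k pi2.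

(* Main.v *)
Require Import Defs.
From mathcomp Require Import all_boot.
From mathcomp Require Import zify.
Set Implicit Arguments. Unset Strict Implicit. Unset Printing Implicit Defensive.

Notation Ss := stack_sort.

Lemma max_mem (A : seq nat) : A != [::] -> \big[maxn/0]_(x <- A) x \in A.
Proof.
elim: A => // x [|y s] IH _.
  by rewrite big_cons big_nil maxn0 mem_seq1.
rewrite big_cons; have := IH isT.
set M := \big[maxn/0]_(x <- y :: s) x => HM.
rewrite in_cons; case: (leqP x M) => h.
- by rewrite HM orbT.
- by rewrite eqxx.
Qed.

Lemma fuelE f1 f2 A : size A <= f1 -> size A <= f2 -> ssort_fuel f1 A = ssort_fuel f2 A.
Proof.
elim: f1 f2 A => [|f1 IH] [|f2] [|x A] //= h1 h2.
have hm := max_mem (isT : x :: A != [::]).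
have hi : index (\big[maxn/0]_(x0 <- x :: A) x0) (x :: A) < size (x :: A) by rewrite index_mem.
congr (_ ++ _ ++ _); apply: IH; rewrite ?size_take_min ?size_drop /=; move: hi h1 h2 => /=; lia.
Qed.

Lemma ssort_unfold f A : A != [::] -> ssort_fuel f.+1 A =
  ssort_fuel f (take (index (\big[maxn/0]_(y <- A) y) A) A) ++
  ssort_fuel f (drop (index (\big[maxn/0]_(y <- A) y) A).+1 A) ++ [:: \big[maxn/0]_(y <- A) y].
Proof. by case: A. Qed.

Lemma Ss_split L m R : all (fun x => x < m) L -> all (fun x => x < m) R ->
  Ss (L ++ m :: R) = Ss L ++ Ss R ++ [:: m].
Proof.
move=> hL hR.
have hmax : \big[maxn/0]_(x <- L ++ m :: R) x = m.
  apply/eqP; rewrite eqn_leq; apply/andP; split.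
  - apply/bigmax_leqP_seq => x; rewrite mem_cat in_cons => /orP [/(allP hL) /ltnW //|/orP [/eqP -> //| /(allP hR) /ltnW //]].
  - by apply: (@leq_bigmax_seq _ (L ++ m :: R) xpredT (fun x => x) m) => //; rewrite mem_cat mem_head orbT.
have hnL : m \notin L by apply/negP => /(allP hL); rewrite ltnn.
rewrite /stack_sort size_cat /= addnS ssort_unfold; last by case: (L).
rewrite hmax index_cat (negbTE hnL) /= eqxx addn0 take_size_cat //.
have -> : drop (size L).+1 (L ++ m :: R) = R by rewrite -cat_rcons drop_size_cat // size_rcons.
by rewrite (@fuelE (size L + size R) (size L) L) ?leq_addr // (@fuelE (size L + size R) (size R) R) ?leq_addl.
Qed.

Lemma split_max w M : uniq w -> M \in w -> all (fun x => x <= M) w ->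
  exists L R, w = L ++ M :: R /\ all (fun x => x < M) L /\ all (fun x => x < M) R.
Proof.
move=> hu hM; case/splitPr: hM hu => p1 p2; rewrite cat_uniq /= => /and3P [_ hn1 /andP [hn2 _]].
rewrite all_cat /= => /and3P [h1 _ h2]; exists p1, p2; split => //; split.
- apply/allP => x hx; rewrite ltn_neqAle (allP h1 _ hx) andbT.
  by apply/eqP => E; move: hn1; rewrite -E hx.
- apply/allP => x hx; rewrite ltn_neqAle (allP h2 _ hx) andbT.
  by apply/eqP => E; move: hn2; rewrite -E hx.
Qed.

Lemma uniq_ind (P : seq nat -> Prop) : P [::] ->
  (forall L m R, uniq (L ++ m :: R) -> all (fun x => x < m) L ->
     all (fun x => x < m) R -> P L -> P R -> P (L ++ m :: R)) ->
  forall w, uniq w -> P w.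
Proof.
move=> P0 Pstep w; move: {2}(size w) (leqnn (size w)) => n; elim: n w => [|n IH] w hs hu.
  by case: w hs hu.
case: w hs hu => [|x s] hs hu; first exact: P0.
have hm := max_mem (isT : x :: s != [::]).
have hall : all (fun y => y <= \big[maxn/0]_(y <- x :: s) y) (x :: s).
  by apply/allP => y hy; apply: (@leq_bigmax_seq _ (x :: s) xpredT (fun x => x) y).
have [L [R [E [hL hR]]]] := split_max hu hm hall.
move: hs hu; rewrite E => hs hu; apply: Pstep => //.
- apply: IH; first by move: hs; rewrite size_cat /=; lia.
  by move: hu; rewrite cat_uniq => /andP [].
- apply: IH; first by move: hs; rewrite size_cat /=; lia.
  by move: hu; rewrite cat_uniq /= => /and4P [_ _ _].
Qed.

Lemma Ss_perm w : uniq w -> perm_eq (Ss w) w.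
Proof.
move: w; apply: uniq_ind => // L m R hu hL hR IHL IHR; rewrite Ss_split //.
apply: (perm_trans (perm_cat IHL (perm_cat IHR (perm_refl [:: m])))).
by rewrite perm_cat2l cats1 perm_rcons.
Qed.

Lemma Ss_uniq w : uniq w -> uniq (Ss w).
Proof. by move=> hu; rewrite (perm_uniq (Ss_perm hu)). Qed.

Lemma Ss_mem w : uniq w -> Ss w =i w.
Proof. by move=> hu; apply: perm_mem; apply: Ss_perm. Qed.

Lemma mono_injn (f : nat -> nat) : {mono f : x y / x < y} -> injective f.
Proof.
move=> hf x y E; case: (ltngtP x y) => // h.
- by have := hf x y; rewrite E h ltnn.
- by have := hf y x; rewrite E h ltnn.
Qed.

Lemma Ss_map f w : {mono f : x y / x < y} -> uniq w -> Ss (map f w) = map f (Ss w).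
Proof.
move=> hf; move: w; apply: uniq_ind => // L m R hu hL hR IHL IHR.
rewrite map_cat /= Ss_split; last first.
- by rewrite all_map; apply: sub_all hR => x /=; rewrite hf.
- by rewrite all_map; apply: sub_all hL => x /=; rewrite hf.
by rewrite IHL IHR Ss_split // !map_cat.
Qed.

Lemma sorted_catE (s1 s2 : seq nat) :
  sorted ltn (s1 ++ s2) = [&& allrel ltn s1 s2, sorted ltn s1 & sorted ltn s2].
Proof. by rewrite !(sorted_pairwise ltn_trans) pairwise_cat. Qed.

Fixpoint badP (p q : pred nat) (s : seq nat) : bool :=
  if s is y :: s' then (p y && has q s') || badP p q s' else false.
Definition bad x s := badP (fun y => x < y) (fun z => z < x) s.
Fixpoint av (s : seq nat) : bool :=
  if s is x :: s' then ~~ bad x s' && av s' else true.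

Lemma badP_cat p q s1 s2 :
  badP p q (s1 ++ s2) = [|| badP p q s1, has p s1 && has q s2 | badP p q s2].
Proof.
elim: s1 => //= y s1 IH; rewrite IH has_cat.
by case: (p y); case: (has q s1); case: (badP p q s1); case: (has p s1);
  case: (has q s2); case: (badP p q s2).
Qed.

Lemma badP_has p q s : badP p q s -> has p s.
Proof. elim: s => //= y s IH /orP [/andP [-> _] //| /IH ->]; by rewrite orbT. Qed.

Lemma badP_hasq p q s : badP p q s -> has q s.
Proof.
elim: s => //= y s IH /orP [/andP [_ ->] //| /IH ->]; by rewrite orbT.
Qed.

Lemma badP_ext p q p' q' s : {in s, p =1 p'} -> {in s, q =1 q'} ->
  badP p q s = badP p' q' s.
Proof.
elim: s => //= y s IH hp hq.
have hp' : {in s, p =1 p'} by move=> z hz; apply: hp; rewrite in_cons hz orbT.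
have hq' : {in s, q =1 q'} by move=> z hz; apply: hq; rewrite in_cons hz orbT.
by rewrite hp ?mem_head // (eq_in_has hq') IH.
Qed.

Lemma badP_map p q f s : badP p q (map f s) = badP (fun x => p (f x)) (fun x => q (f x)) s.
Proof. by elim: s => //= y s ->; rewrite has_map. Qed.

Lemma av_cat s1 s2 : av (s1 ++ s2) -> av s1 && av s2.
Proof.
elim: s1 => //= x s1 IH /andP [hb /IH /andP [h1 h2]]; rewrite h1 h2 andbT.
by move: hb; rewrite /bad badP_cat; case: (badP _ _ s1).
Qed.

Lemma av_cross s1 s2 x : av (s1 ++ s2) -> x \in s1 -> ~~ bad x s2.
Proof.
elim: s1 => //= y s1 IH /andP [hb ha]; rewrite in_cons => /orP [/eqP -> | hx].
- by move: hb; rewrite /bad badP_cat; case: (badP _ _ s2) => //; rewrite !orbT.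
- exact: IH.
Qed.

Lemma av_cat_lt s1 s2 : av s1 -> av s2 -> allrel ltn s1 s2 -> av (s1 ++ s2).
Proof.
elim: s1 => //= x s1 IH /andP [hb ha] h2; rewrite allrel_consl => /andP [hx hr].
rewrite IH // andbT /bad badP_cat negb_or hb /=.
have hq : has (fun z => z < x) s2 = false.
  by apply/hasPn => z /(allP hx) h /=; rewrite -leqNgt ltnW.
rewrite hq andbF /=; apply/negP => /badP_hasq; by rewrite hq.
Qed.

Lemma av_map f s : {mono f : x y / x < y} -> av (map f s) = av s.
Proof.
move=> hf; elim: s => //= x s ->; congr (~~ _ && _).
by rewrite /bad badP_map; apply: badP_ext => y _ /=; rewrite hf.
Qed.

Lemma av_sorted w : uniq w -> av w -> sorted ltn (Ss w).
Proof.
move: w; apply: uniq_ind => // L m R hu hL hR IHL IHR ha.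
have /andP [aL aMR] := av_cat ha.
have /andP [_ aR] := aMR.
move: (hu); rewrite cat_uniq /= => /and3P [uL hdis /andP [hmR uR]].
have cross : forall x y, x \in L -> y \in R -> x < y.
  move=> x y hx hy; have := av_cross ha hx; rewrite /bad /= (allP hL x hx) /=.
  case/norP => /hasPn /(_ y hy) /= h _.
  rewrite ltn_neqAle leqNgt h andbT; apply/eqP => E.
  by move: hdis; rewrite negb_or => /andP [_ /hasPn /(_ y hy)]; rewrite -E hx.
rewrite Ss_split // sorted_catE sorted_catE (IHL aL) (IHR aR) /= andbT.
apply/andP; split; apply/allrelP => x y.
- rewrite (Ss_mem uL) mem_cat (Ss_mem uR) mem_seq1 => hx /orP [hy | /eqP ->].
  + exact: cross.
  + exact: (allP hL x hx).
- rewrite (Ss_mem uR) mem_seq1 => hx /eqP ->; exact: (allP hR x hx).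
Qed.

Lemma sorted_av w : uniq w -> sorted ltn (Ss w) -> av w.
Proof.
move: w; apply: uniq_ind => // L m R hu hL hR IHL IHR.
move: (hu); rewrite cat_uniq /= => /and3P [uL hdis /andP [hmR uR]].
rewrite Ss_split // sorted_catE sorted_catE => /and5P [hr1 sL hr2 sR _].
apply: av_cat_lt; first exact: IHL sL.
- rewrite /=; apply/andP; split; last exact: IHR.
  apply/negP => /badP_has /hasP [y hy h]; have := allP hR y hy => /=.
  by rewrite ltnNge (ltnW h).
- apply/allrelP => x y hx; rewrite in_cons => /orP [/eqP -> | hy].
  + exact: (allP hL x hx).
  + apply: (allrelP hr1); first by rewrite (Ss_mem uL).
    by rewrite mem_cat (Ss_mem uR) hy.
Qed.

Fixpoint lrmS (pre s : seq nat) : seq nat :=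
  if s is x :: s' then
    (if all (fun y => y < x) pre then x :: lrmS (rcons pre x) s' else lrmS (rcons pre x) s')
  else [::].

Lemma lrmax_valsE s : lrmax_vals s = lrmS [::] s.
Proof.
suff H : forall p, [seq nth 0 (p ++ s) i | i <- iota (size p) (size s)
     & all (fun j => nth 0 (p ++ s) j < nth 0 (p ++ s) i) (iota 0 i)] = lrmS p s.
  exact: (H [::]).
elim: s => [|x s IH] p //=.
have E : p ++ x :: s = rcons p x ++ s by rewrite cat_rcons.
have Hx : nth 0 (p ++ x :: s) (size p) = x by rewrite nth_cat ltnn subnn.
have K : all (fun j => nth 0 (p ++ x :: s) j < nth 0 (p ++ x :: s) (size p)) (iota 0 (size p))
         = all (fun y => y < x) p.
  rewrite Hx -[in RHS](mkseq_nth 0 p) /mkseq all_map; apply: eq_in_all => j.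
  by rewrite mem_iota add0n /= => hj; rewrite nth_cat hj.
rewrite K -(IH (rcons p x)) size_rcons -E.
by case: ifP => _ //=; rewrite Hx.
Qed.

Lemma lrmS_cat pre s1 s2 : lrmS pre (s1 ++ s2) = lrmS pre s1 ++ lrmS (pre ++ s1) s2.
Proof.
elim: s1 pre => [|x s1 IH] pre /=; first by rewrite cats0.
by rewrite IH cat_rcons; case: ifP.
Qed.

Lemma lrmS_cons c pre s : lrmS (c :: pre) s = filter (fun x => c < x) (lrmS pre s).
Proof.
elim: s pre => //= x s IH pre; rewrite !IH.
case: (all _ pre) => /=; case: (c < x) => //=.
Qed.

Lemma lrmS_map f pre s : {mono f : x y / x < y} ->
  lrmS (map f pre) (map f s) = map f (lrmS pre s).
Proof.
move=> hf; elim: s pre => //= x s IH pre.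
rewrite -map_rcons !IH all_map.
have -> : all (preim f (fun y => y < f x)) pre = all (fun y => y < x) pre.
  by apply: eq_all => y /=; rewrite hf.
by case: ifP.
Qed.

Lemma lrmS_ext pre pre' s :
  (forall x, all (fun y => y < x) pre = all (fun y => y < x) pre') ->
  lrmS pre s = lrmS pre' s.
Proof.
elim: s pre pre' => //= x s IH pre pre' h.
by rewrite h (IH _ (rcons pre' x)) // => y; rewrite !all_rcons h.
Qed.

Lemma lrmS_gt pre s : all (fun x => all (fun y => y < x) pre) (lrmS pre s).
Proof.
elim: s pre => //= x s IH pre.
have H : all (fun z => all (fun y => y < z) pre) (lrmS (rcons pre x) s).
  by apply: sub_all (IH (rcons pre x)) => z /=; rewrite all_rcons => /andP [].
by case: ifP => //= ->.
Qed.

Lemma lrmS_sorted pre s : sorted ltn (lrmS pre s).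
Proof.
elim: s pre => //= x s IH pre; case: ifP => _ //=.
rewrite path_sortedE; last exact: ltn_trans.
rewrite IH andbT; apply: sub_all (lrmS_gt (rcons pre x) s) => z /=.
by rewrite all_rcons => /andP [].
Qed.

Lemma count_gt_nth L j : sorted ltn L -> j < size L ->
  count (fun x => nth 0 L j < x) L = size L - j.+1.
Proof.
elim: L j => // x L IH [|j] /=; rewrite path_sortedE; try exact: ltn_trans.
- move=> /andP [hx _] _; rewrite ltnn add0n subn1 /=.
  by apply/eqP; rewrite -all_count.
- move=> /andP [hx hs] hj.
  have hin : nth 0 L j \in L by rewrite mem_nth.
  have := allP hx _ hin => /= hlt.
  rewrite IH //; have -> : (nth 0 L j < x) = false by rewrite ltnNge ltnW.
  by rewrite add0n subSS.
Qed.

Lemma lrmS_split pre s x : x \in lrmS pre s ->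
  exists s1 s2, s = s1 ++ x :: s2 /\ all (fun y => y < x) (pre ++ s1).
Proof.
elim: s pre => //= y s IH pre.
have H : x \in lrmS (rcons pre y) s -> exists s1 s2, y :: s = s1 ++ x :: s2 /\ all (fun z => z < x) (pre ++ s1).
  move=> hx; have [s1 [s2 [E H]]] := IH _ hx; exists (y :: s1), s2; rewrite E; split => //.
  by rewrite -cat_rcons.
case: ifP => h //; rewrite in_cons => /orP [/eqP -> | hx]; last exact: H.
by exists [::], s; rewrite cats0.
Qed.

Definition sh (k1 m k2 x : nat) := if x < m then x + k1 else x + k2.

Lemma sh_mono k1 m k2 : k1 <= k2 -> {mono sh k1 m k2 : x y / x < y}.
Proof.
move=> h x y; rewrite /sh.
case: (ltnP x m) => hx; case: (ltnP y m) => hy; apply/idP/idP; lia.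
Qed.


Lemma A1 k l a x : x <= k -> a <= l -> sh 0 k a x < k + l + 1.
Proof. rewrite /sh; case: ifP; lia. Qed.
Lemma A2 k l a y : y <= l -> 0 < k -> sh (k-1) (a+1) k y < k + l + 1.
Proof. rewrite /sh; case: ifP; lia. Qed.
Lemma A3 k l a x y : 1 <= x <= k -> 1 <= y <= l -> 0 < k -> sh 0 k a x != sh (k-1) (a+1) k y.
Proof. rewrite /sh; case: ifP; case: ifP; lia. Qed.
Lemma A4 k l a x : 1 <= x <= k -> a <= l -> 1 <= sh 0 k a x < 1 + (k + l + 1).
Proof. rewrite /sh; case: ifP; lia. Qed.
Lemma A5 k l a y : 1 <= y <= l -> 0 < k -> 1 <= sh (k-1) (a+1) k y < 1 + (k + l + 1).
Proof. rewrite /sh; case: ifP; lia. Qed.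
Lemma A6 k a y : 0 < k -> (k + a < sh (k-1) (a+1) k y) = (a < y).
Proof. rewrite /sh; case: ifP => h hk; apply/idP/idP; lia. Qed.
Lemma A7 k a y : 0 < k -> y != a -> (sh (k-1) (a+1) k y < k + a) = (y < a).
Proof. rewrite /sh; case: ifP => h hk hy; apply/idP/idP; lia. Qed.
Lemma A8 k a y : 0 < k -> 1 <= y -> k <= sh (k-1) (a+1) k y.
Proof. rewrite /sh; case: ifP; lia. Qed.
Lemma A9 k a : k + a < sh (k-1) (a+1) k a = false.
Proof. rewrite /sh; case: ifP => h; apply/negbTE; lia. Qed.
Lemma memI x n : (x \in iota 1 n) = (1 <= x <= n).
Proof. rewrite mem_iota; apply/idP/idP; lia. Qed.
Lemma memI2 n : 0 < n -> n \in iota 1 n.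
Proof. rewrite memI; lia. Qed.
Lemma predlt i n : 0 < i -> i <= n -> i.-1 < n.
Proof. lia. Qed.
Lemma A10 k a l : a <= l -> k + a < k + l + 1.
Proof. lia. Qed.
Lemma A11 x k l : x < k -> x < k + l + 1.
Proof. lia. Qed.
Lemma A12 s t i : i <= t -> s + (t - i + 1).+1 = s + 1 + t - i + 1.
Proof. lia. Qed.

Theorem proposition6 (k l : nat) (pi1 pi2 : seq nat) (i : nat) :
  0 < k -> 0 < l -> inT k pi1 -> inT l pi2 ->
  1 <= i <= slmax pi2 ->
  inT (k + l + 1) (C2 k l pi1 pi2 i) /\
  slmax (C2 k l pi1 pi2 i) = slmax pi1 + slmax pi2 - i + 1.
Proof.
move=> hk hl /andP [p1 e1] /andP [p2 e2] /andP [hi1 hi2].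
pose a := nth 0 (lrmax_vals (Ss pi2)) i.-1.
pose g1 := sh 0 k a.
pose g2 := sh (k - 1) (a + 1) k.
pose N := k + l + 1.
have EC : C2 k l pi1 pi2 i = map g1 pi1 ++ N :: map g2 pi2 by [].
have mono1 : {mono g1 : x y / x < y} by apply: sh_mono.
have mono2 : {mono g2 : x y / x < y} by apply: sh_mono; apply: leq_subr.
have u1 : uniq pi1 by rewrite (perm_uniq p1) iota_uniq.
have u2 : uniq pi2 by rewrite (perm_uniq p2) iota_uniq.
have m1 : forall x, x \in pi1 -> 1 <= x <= k.
  by move=> x; rewrite (perm_mem p1) memI.
have m2 : forall x, x \in pi2 -> 1 <= x <= l.
  by move=> x; rewrite (perm_mem p2) memI.
set s2 := Ss pi2.
have us2 : uniq s2 by apply: Ss_uniq.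
have ms2 : forall x, x \in s2 -> 1 <= x <= l by move=> x; rewrite Ss_mem // => /m2.
move: hi2; rewrite /slmax -/s2 lrmax_valsE => hi2.
set L2 := lrmS [::] s2.
have ha_def : a = nth 0 L2 i.-1 by rewrite /a -/s2 lrmax_valsE.
have hi' : i.-1 < size L2 by case: (i) hi1 hi2.
have ha : a \in L2 by rewrite ha_def mem_nth.
have [s1' [s2' [Es2 hs1']]] := lrmS_split ha.
have as2 : a \in s2 by rewrite Es2 mem_cat mem_head orbT.
have hab := ms2 a as2.
have [L [R [Ep1 [hL hR]]]] : exists L R, pi1 = L ++ k :: R /\
    all (fun x => x < k) L /\ all (fun x => x < k) R.
  apply: split_max => //; first by rewrite (perm_mem p1) memI2.
  by apply/allP => x /m1 /andP [].
have uLR : uniq L && uniq R.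
  by move: u1; rewrite Ep1 cat_uniq /= => /and3P [-> _ /andP [_ ->]].
case/andP: uLR => uL uR.
set u := Ss L ++ Ss R.
have Es1 : Ss pi1 = u ++ [:: k] by rewrite Ep1 Ss_split // catA.
have hu : all (fun x => x < k) u.
  apply/allP => x; rewrite mem_cat (Ss_mem uL) (Ss_mem uR) => /orP [/(allP hL) | /(allP hR)] //.
have av1 : av (Ss pi1).
  by apply: sorted_av; [apply: Ss_uniq | rewrite (eqP e1) iota_ltn_sorted].
have avu : av u by move: av1; rewrite Es1 => /av_cat /andP [].
have avs2 : av s2.
  by apply: sorted_av; [apply: Ss_uniq | rewrite (eqP e2) iota_ltn_sorted].
have ESC : Ss (C2 k l pi1 pi2 i) = u ++ (k + a) :: (map g2 s2 ++ [:: N]).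
  rewrite EC Ss_split; first last.
  - by rewrite all_map; apply/allP => y /m2 /andP [_ hy] /=; apply: A2.
  - by rewrite all_map; apply/allP => y /m1 /andP [_ hy] /=; apply: A1; case/andP: hab.
  rewrite (Ss_map mono1 u1) (Ss_map mono2 u2) Es1 map_cat -/s2.
  have -> : map g1 u = u.
    rewrite -[RHS]map_id; apply/eq_in_map => x hx.
    by rewrite /g1 /sh (allP hu x hx) addn0.
  by rewrite /= {1}/g1 /sh ltnn -catA.
have bN1 : forall x, x \in pi1 -> g1 x < N.
  by move=> x /m1 /andP [_ hx]; apply: A1; case/andP: hab.
have bN2 : forall y, y \in pi2 -> g2 y < N.
  by move=> y /m2 /andP [_ hy]; apply: A2.
have uC : uniq (C2 k l pi1 pi2 i).
  rewrite EC cat_uniq /= (map_inj_uniq (mono_injn mono1)) (map_inj_uniq (mono_injn mono2)) u1 u2 /=.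
  rewrite andbT negb_or -andbA; apply/and3P; split.
  - by apply/mapP => [[x hx E]]; have := bN1 x hx; rewrite -E ltnn.
  - apply/hasPn => z /mapP [y hy ->]; apply/mapP => [[x hx E]]; move: E; apply/eqP.
    by rewrite eq_sym; apply: A3; [apply: m1 | apply: m2 |].
  - by apply/mapP => [[y hy E]]; have := bN2 y hy; rewrite -E ltnn.
have sub : {subset C2 k l pi1 pi2 i <= iota 1 N}.
  move=> z; rewrite EC mem_cat in_cons mem_iota => /or3P [/mapP [x hx ->] | /eqP -> | /mapP [y hy ->]].
  + by apply: A4; [apply: m1 | case/andP: hab].
  + by rewrite add1n ltnSn andbT /N addn1.
  + by apply: A5; [apply: m2 |].
have hsz : size (iota 1 N) <= size (C2 k l pi1 pi2 i).
  rewrite EC size_iota size_cat /= size_map size_map (perm_size p1) (perm_size p2) size_iota size_iota /N.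
  by rewrite addn1 addnS.
have [_ hmem] := uniq_min_size uC sub hsz.
have pC : perm_eq (C2 k l pi1 pi2 i) (iota 1 N).
  by apply: uniq_perm => //; apply: iota_uniq.
have uSC : uniq (Ss (C2 k l pi1 pi2 i)) by apply: Ss_uniq.
have uE : uniq (s1' ++ a :: s2') by rewrite -Es2.
have hbad : ~~ bad (k + a) (map g2 s2).
  rewrite /bad badP_map Es2 badP_cat.
  have hp1 : has (fun x => k + a < g2 x) s1' = false.
    apply/hasPn => y hy /=; rewrite /g2 A6 // -leqNgt ltnW //.
    exact: (allP hs1' y hy).
  rewrite hp1 /=; apply/negP => /orP [/badP_has | ]; first by rewrite hp1.
  rewrite {1}/g2 A9 /=.
  have : ~~ bad a s2'.
    by move: avs2; rewrite Es2 => /av_cat /andP [_ /andP [hb _]].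
  rewrite /bad (@badP_ext (fun x => k + a < g2 x) (fun x => g2 x < k + a) (fun y => a < y) (fun z => z < a)) //.
  - by move/negP.
  - by move=> y _; rewrite /g2 A6.
  - move=> y hy; rewrite /g2 A7 //; apply/eqP => E; move: uE; rewrite cat_uniq /= => /and3P [_ _ /andP [hn _]].
    by move: hn; rewrite -E hy.
have avSC : av (Ss (C2 k l pi1 pi2 i)).
  rewrite ESC; apply: av_cat_lt => //.
  - rewrite -cat_cons; apply: av_cat_lt => //=.
    + by rewrite hbad av_map.
    + apply/allrelP => x y; rewrite in_cons mem_seq1 => /orP [/eqP -> | /mapP [z hz ->]] /eqP ->.
      * by apply: A10; case/andP: hab.
      * by apply: bN2; rewrite -(Ss_mem u2).
  - apply/allrelP => x y hx; have hxk := allP hu x hx.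
    rewrite in_cons mem_cat mem_seq1 => /or3P [/eqP -> | /mapP [z hz ->] | /eqP ->].
    + exact: (leq_trans hxk (leq_addr _ _)).
    + by apply: (leq_trans hxk); apply: A8 => //; case/andP: (ms2 z hz).
    + exact: A11.
split.
  apply/andP; split; first exact: pC.
  apply/eqP; apply: (irr_sorted_eq ltn_trans ltnn); first exact: av_sorted.
  - exact: iota_ltn_sorted.
  - by move=> x; rewrite (Ss_mem uSC) (Ss_mem uC) hmem.
have hu' : all (fun y => y < k + a) u.
  by apply: sub_all hu => y /= h; exact: leq_trans h (leq_addr _ _).
have E1 : lrmS [::] (u ++ [:: k]) = lrmS [::] u ++ [:: k] by rewrite lrmS_cat /= hu.
have hallN : all (fun y => y < N) (k + a :: map g2 s2).
  rewrite /= A10; last by case/andP: hab.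
  by rewrite all_map; apply/allP => y hy /=; apply: bN2; rewrite -(Ss_mem u2).
have E2 : lrmS [::] (u ++ (k + a) :: (map g2 s2 ++ [:: N])) =
   lrmS [::] u ++ (k + a) :: (filter (fun x => k + a < x) (map g2 L2) ++ [:: N]).
  rewrite lrmS_cat /= hu'; congr (_ ++ _ :: _).
  rewrite (@lrmS_ext _ [:: k + a]); last first.
    move=> x; rewrite all_rcons /= andbT; case h: (k + a < x) => //=.
    by apply/allP => y hy; exact: (ltn_trans (allP hu' y hy) h).
  rewrite lrmS_cat lrmS_cons /=.
  have -> : lrmS [::] (map g2 s2) = map g2 L2 by have := @lrmS_map g2 [::] s2 mono2.
  by move: hallN => /= ->.
have hcnt : count (fun x => k + a < g2 x) L2 = size L2 - i.
  rewrite (eq_count (a2 := fun x => nth 0 L2 i.-1 < x)); last first.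
    by move=> x /=; rewrite /g2 A6 // ha_def.
  by rewrite count_gt_nth ?lrmS_sorted // prednK.
rewrite /slmax !lrmax_valsE ESC Es1 -/s2 -/L2 E1 E2 filter_map !size_cat /= size_cat size_map size_filter hcnt /=.
by apply: A12.
Qed.
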